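(* Fix a positive integer $n$. For a prime power $q$, let $p_r(q,n)$ denote the probability that a uniformly random differential on ${\mathbb F}_q^n$ has $r$-dimensional homology. Then for every $r>1$ with $r\equiv n \pmod 2$, $\lim_{q\to\infty} p_r(q,n)=0$. Moreover, $\lim_{q\to\infty}p_0(q,n)=1$ if $n$ is even, and $\lim_{q\to\infty}p_1(q,n)=1$ if $n$ is odd. (Here $q$ ranges over prime powers.) *)

(* Defs.v *)
From HB Require Import structures.
From mathcomp Require Import all_boot all_order all_algebra all_field.
Set Implicit Arguments. Unset Strict Implicit. Unset Printing Implicit Defensive.
Import Order.TTheory GRing.Theory Num.Theory.
Local Open Scope ring_scope.

Definition differentials (F : finFieldType) (n : nat) : {set 'M[F]_n} :=
  [set d : 'M[F]_n | d *m d == 0].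

Definition homology_dim (F : finFieldType) (n : nat) (d : 'M[F]_n) : nat :=
  (\rank (kermx d) - \rank d)%N.

Definition p_hom (F : finFieldType) (n r : nat) : rat :=
  (#|[set d in differentials F n | homology_dim d == r]|%:R)
    / (#|differentials F n|%:R).

(* Limit as q = #|F| -> infinity, F ranging over all finite fields
   (equivalently over prime powers q, as p_hom depends only on #|F|). *)
Definition tends_to_as_q_infty (f : finFieldType -> rat) (l : rat) : Prop :=
  forall eps : rat, 0 < eps ->
    exists Q : nat, forall F : finFieldType, (Q <= #|F|)%N -> `|f F - l| < eps.

(* Main.v *)
Require Import Defs.
From HB Require Import structures.
From mathcomp Require Import all_boot all_order all_algebra all_field zify ring lra.
Import Order.TTheory GRing.Theory Num.Theory.
Local Open Scope ring_scope.
Set Warnings "-notation-overridden,-ambiguous-paths".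
Set Implicit Arguments. Unset Strict Implicit. Unset Printing Implicit Defensive.
Lemma card_fibers (T U : finType) (S : {set T}) (g : T -> U) :
  #|S| = (\sum_(u : U) #|[set x in S | g x == u]|)%N.
Proof.
rewrite -sum1_card (partition_big g xpredT) //; apply: eq_bigr => u _.
by rewrite -sum1_card; apply: eq_bigl => x; rewrite !inE.
Qed.

Lemma card_pairs (A B : finType) (S : {set A * B}) :
  #|S| = (\sum_(b : B) #|[set a | (a, b) \in S]|)%N.
Proof.
rewrite (card_fibers S snd); apply: eq_bigr => b _.
have inj : injective (fun a : A => (a, b)) by move=> a1 a2 [].
rewrite -(card_imset [set a | (a, b) \in S] inj).
apply: eq_card => -[a b']; rewrite !inE; apply/andP/imsetP => [[H /eqP /= E]|[a' ]].
  by exists a; rewrite ?inE -?E.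
by rewrite inE => H [-> ->].
Qed.

Lemma card_sub (F : finFieldType) p k n (K : 'M[F]_(p,n)) :
  (#|[set X : 'M[F]_(k,n) | (X <= K)%MS]| <= #|F| ^ (k * \rank K))%N.
Proof.
rewrite -card_mx -cardsT.
apply: leq_trans (leq_imset_card (fun D : 'M[F]_(k, \rank K) => D *m row_base K) _).
apply/subset_leq_card/subsetP => X; rewrite inE -(eq_row_base K) => /submxP [D ->].
by apply/imsetP; exists D.
Qed.

Lemma card_nonfree (F : finFieldType) m r : (m <= r)%N ->
  (#|[set Y : 'M[F]_(m,r) | ~~ row_free Y]| * #|F| <= m * #|F| ^ (m * r))%N.
Proof.
have q0 : (0 < #|F|)%N by apply/card_gt0P; exists 0.
elim: m => [|m IH] Hm.
  rewrite (_ : [set Y | _] = set0) ?cards0 //; apply/setP => Y; rewrite !inE /row_free.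
  by rewrite -leqn0 rank_leq_row.
have IH' := IH (ltnW Hm).
set q := #|F|.
pose S := [set p : 'rV[F]_r * 'M[F]_(m, r) | ~~ row_free (col_mx p.1 p.2)].
have h1 : (#|[set Y : 'M[F]_(m.+1,r) | ~~ row_free Y]| <= #|S|)%N.
  apply: leq_trans (leq_imset_card (fun p : 'rV[F]_r * 'M[F]_(m, r) => (col_mx p.1 p.2 : 'M[F]_(m.+1, r))) S).
  apply/subset_leq_card/subsetP => Y; rewrite inE => HY; apply/imsetP.
  exists (usubmx (Y : 'M_(1 + m, r)), dsubmx (Y : 'M_(1 + m, r))); last by rewrite vsubmxK.
  by rewrite inE /= vsubmxK.
have h2 : (#|S| <= q ^ (m * r) * q ^ m + #|[set Y : 'M[F]_(m,r) | ~~ row_free Y]| * q ^ r)%N.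
  rewrite card_pairs.
  apply: leq_trans (_ : \sum_(b : 'M[F]_(m,r)) (q ^ m + (if ~~ row_free b then q ^ r else 0)) <= _)%N.
    apply: leq_sum => b _. case: ifP => Hb.
      apply: leq_trans (_ : q ^ r <= _)%N; last exact: leq_addl.
      by apply: leq_trans (max_card _) _; rewrite card_mx mul1n.
    rewrite addn0; apply: leq_trans (_ : #|[set a : 'rV[F]_r | (a <= b)%MS]| <= _)%N.
      apply/subset_leq_card/subsetP => a; rewrite !inE /= => Ha.
      case/boolP: (a <= b)%MS => // Hab; exfalso; move/negP: Ha; apply.
      have Hlt : (b < col_mx a b)%MS.
        have sub1 : (b <= col_mx a b)%MS by rewrite -addsmxE addsmxSr.
        by rewrite ltmxE sub1 col_mx_sub negb_and Hab.
      have := rank_ltmx Hlt; move/negbFE: Hb; rewrite /row_free => /eqP ->.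
      have := rank_leq_row (col_mx a b).
      move=> H1 H2; have -> : \rank (col_mx a b) = (1 + m)%N by apply: anti_leq; rewrite H1; exact: H2.
      exact: eqxx.
    apply: leq_trans (card_sub 1 b) _; rewrite mul1n leq_pexp2l //.
    exact: rank_leq_row.
  rewrite big_split /= sum_nat_const card_mx leq_add2l -big_mkcond /= sum_nat_const.
  by rewrite leq_mul2r; apply/orP; right; apply/subset_leq_card/subsetP => x; rewrite !inE.
apply: leq_trans (leq_mul h1 (leqnn q)) _.
apply: leq_trans (leq_mul h2 (leqnn q)) _.
have e1 : (q ^ m * q <= q ^ r)%N by rewrite -expnSr leq_pexp2l.
rewrite mulSn expnD.
move: IH' e1; rewrite -/q.
move: (q ^ (m * r))%N (q ^ m)%N (q ^ r)%N (#|[set Y : 'M[F]_(m,r) | ~~ row_free Y]|) => X Y Z N.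
move=> H1 H2; nia.
Qed.

Lemma card_free (F : finFieldType) m r : (m <= r)%N -> (2 * m <= #|F|)%N ->
  (#|F| ^ (m * r) <= 2 * #|[set Y : 'M[F]_(m,r) | row_free Y]|)%N.
Proof.
move=> Hmr Hq.
have q0 : (0 < #|F|)%N by apply/card_gt0P; exists 0.
have H := @card_nonfree F m r Hmr.
have E : (#|[set Y : 'M[F]_(m,r) | row_free Y]| + #|[set Y : 'M[F]_(m,r) | ~~ row_free Y]| = #|F| ^ (m * r))%N.
  rewrite -card_mx -(cardsC [set Y : 'M[F]_(m,r) | row_free Y]); congr (_ + _)%N.
  by apply: eq_card => Y; rewrite !inE.
move: H E Hq q0; move: (#|F| ^ (m * r))%N #|F| (#|[set Y : 'M[F]_(m,r) | row_free Y]|) (#|[set Y : 'M[F]_(m,r) | ~~ row_free Y]|) => X q A N.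
case: m {Hmr} => [|m] H1 H2 H3 H4; nia.
Qed.

Definition Dk (F : finFieldType) n k := [set d in differentials F n | \rank d == k].

Lemma factor_diff (F : finFieldType) n (d : 'M[F]_n) : d *m d = 0 ->
  exists (A : 'M[F]_(n, \rank d)) (B : 'M[F]_(\rank d, n)),
    [/\ A *m B = d, B *m A = 0, row_free B & row_full A].
Proof.
move=> dd; have := mulmx_base d; have := col_base_full d; have := row_base_free d.
move: (col_base d) (row_base d) => A B hB hA E; exists A, B; split => //.
apply: (row_full_inj hA); apply: (row_free_inj hB).
by rewrite mulmx0 mul0mx mulmxA E -mulmxA E.
Qed.

Lemma card_Dk_upper (F : finFieldType) n k : (k <= n)%N -> (2 * k <= #|F|)%N ->
  (#|Dk F n k| <= 2 * #|F| ^ (2 * k * (n - k)))%N.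
Proof.
move=> Hkn Hq.
have q0 : (0 < #|F|)%N by apply/card_gt0P; exists 0.
pose P := [set p : 'M[F]_(n,k) * 'M[F]_(k,n) | (p.2 *m p.1 == 0) && row_free p.2 && row_full p.1].
pose GL := [set G : 'M[F]_k | row_free G].
have ha : (#|Dk F n k| * #|GL| <= #|P|)%N.
  rewrite (card_fibers P (fun p => p.1 *m p.2)) -sum_nat_const.
  rewrite [X in (_ <= X)%N](bigID (fun u => u \in Dk F n k)) /=.
  apply: leq_trans (leq_addr _ _); apply: leq_sum => d.
  rewrite !inE => /andP [Hdd /eqP Hrk].
  move: (factor_diff (eqP Hdd)); rewrite Hrk => -[A [B [HAB HBA HB HA]]].
  have inj : injective (fun G : 'M[F]_k => (A *m G, invmx G *m B)).
    by move=> G1 G2 [/(row_full_inj HA)].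
  rewrite -(card_imset GL inj); apply/subset_leq_card/subsetP => p /imsetP [G].
  rewrite inE row_free_unit => HG -> /=; rewrite !inE /=.
  rewrite mulmxA -(mulmxA (invmx G)) HBA mulmx0 mul0mx eqxx /=.
  rewrite /row_free (eqmxMfull B (_ : row_full (invmx G))) ?row_full_unit ?unitmx_inv //.
  rewrite -/(row_free B) HB /=.
  rewrite /row_full mxrankMfree ?row_free_unit // -/(row_full A) HA /=.
  by rewrite mulmxA mulmxK // HAB.
have hb : (#|P| <= #|F| ^ (k * n) * #|F| ^ (k * (n - k)))%N.
  rewrite card_pairs -card_mx -sum_nat_const; apply: leq_sum => B _.
  case/boolP: (row_free B) => HB; last first.
    rewrite (_ : [set a | _] = set0) ?cards0 //; apply/setP => A.
    by rewrite !inE /= (negbTE HB) andbF.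
  apply: leq_trans (_ : #|[set X : 'M[F]_(k,n) | (X <= kermx B^T)%MS]| <= _)%N.
    rewrite -(card_imset _ (@trmx_inj _ n k)); apply/subset_leq_card/subsetP => X.
    case/imsetP => A; rewrite !inE /= => /andP [/andP [HBA _] _] ->.
    by rewrite sub_kermx -trmx_mul trmx_eq0.
  apply: leq_trans (card_sub k (kermx B^T)) _.
  by rewrite mxrank_ker mxrank_tr (eqP HB).
have hc := @card_free F k k (leqnn k) Hq.
have Eexp : (k * n + k * (n - k) = 2 * k * (n - k) + k * k)%N by nia.
rewrite -expnD Eexp expnD in hb.
have qk : (0 < #|F| ^ (k * k))%N by rewrite expn_gt0 q0.
move: ha hb hc qk; rewrite -/GL.
move: (#|F| ^ (2 * k * (n - k)))%N (#|F| ^ (k * k))%N #|GL| #|P| #|Dk F n k| => X Y g p D.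
move=> H1 H2 H3 H4; nia.
Qed.

Lemma rank_colmx_full (F : fieldType) p a m (U : 'M[F]_(p, m)) (Y : 'M[F]_(a, m)) :
  \rank Y = m -> \rank (col_mx U Y) = m.
Proof.
move=> HY; apply: anti_leq; rewrite rank_leq_col /= -{1}HY.
by apply: mxrankS; rewrite -addsmxE addsmxSr.
Qed.

Lemma rank_colmx_full_top (F : fieldType) p a m (U : 'M[F]_(p, m)) (Y : 'M[F]_(a, m)) :
  \rank U = m -> \rank (col_mx U Y) = m.
Proof.
move=> HY; apply: anti_leq; rewrite rank_leq_col /= -{1}HY.
by apply: mxrankS; rewrite -addsmxE addsmxSl.
Qed.

Lemma lower_aux (F : finFieldType) m a : (m <= a)%N -> (2 * m <= #|F|)%N ->
  (#|F| ^ (2 * m * a) <= 2 * #|Dk F (m + a) m|)%N.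
Proof.
move=> Hma Hq.
pose f (p : 'M[F]_(m,a) * 'M[F]_(m,a)) : 'M[F]_(m + a) :=
  col_mx (- (p.1 *m p.2^T)) p.2^T *m row_mx (1%:M : 'M[F]_m) p.1.
pose S := [set p : 'M[F]_(m,a) * 'M[F]_(m,a) | row_free p.2].
have HS : #|S| = (#|F| ^ (m * a) * #|[set Y : 'M[F]_(m,a) | row_free Y]|)%N.
  rewrite -card_mx -cardsT -cardsX; apply: eq_card => -[X Y]; rewrite !inE.
  by [].
have key : forall X Y : 'M[F]_(m,a), row_free Y ->
    [/\ row_mx (1%:M : 'M[F]_m) X *m col_mx (- (X *m Y^T)) Y^T = 0,
        \rank (col_mx (- (X *m Y^T)) Y^T) = m & row_free (row_mx (1%:M : 'M[F]_m) X)].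
  move=> X Y HY; split.
  - by rewrite mul_row_col mul1mx addNr.
  - by apply: rank_colmx_full; rewrite mxrank_tr; apply/eqP.
  - by rewrite /row_free -mxrank_tr tr_row_mx trmx1 rank_colmx_full_top ?mxrank1.
have sq0 : forall (A : 'M[F]_(m + a, m)) (B : 'M[F]_(m, m + a)), B *m A = 0 -> (A *m B) *m (A *m B) = 0.
  by move=> A B BA; rewrite mulmxA -(mulmxA A B A) BA mulmx0 mul0mx.
have inj : {in S &, injective f}.
  move=> [X1 Y1] [X2 Y2]; rewrite !inE /= => H1 H2 E.
  have [_ rA1 _] := key X1 Y1 H1.
  have eA : forall X Y : 'M[F]_(m,a), f (X, Y) *m col_mx 1%:M 0 = col_mx (- (X *m Y^T)) Y^T.
    by move=> X Y; rewrite /f /= -mulmxA mul_row_col mul1mx mulmx0 addr0 mulmx1.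
  have EA : col_mx (- (X1 *m Y1^T)) Y1^T = col_mx (- (X2 *m Y2^T)) Y2^T by rewrite -!eA E.
  have EY : Y1 = Y2 by apply: trmx_inj; case/eq_col_mx: EA => _ ->.
  subst Y2.
  have EB : row_mx 1%:M X1 = row_mx 1%:M X2.
    apply: (row_full_inj (_ : row_full (col_mx (- (X1 *m Y1^T)) Y1^T))).
      by rewrite /row_full rA1.
    by move: E; rewrite /f /= -EA.
  by case/eq_row_mx: EB => _ ->.
have sub : [set f p | p in S] \subset Dk F (m + a) m.
  apply/subsetP => d /imsetP [[X Y]]; rewrite inE /= => HY ->.
  have [BA rA fB] := key X Y HY.
  by rewrite !inE /f /= sq0 // eqxx /= mxrankMfree // rA.
have h1 := subset_leq_card sub; rewrite (card_in_imset inj) HS in h1.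
have h2 := @card_free F m a Hma Hq.
rewrite (_ : 2 * m * a = m * a + m * a)%N; last by lia.
rewrite expnD.
move: h1 h2; move: (#|F| ^ (m * a))%N #|[set Y : 'M[F]_(m,a) | row_free Y]| #|Dk F (m + a) m| => X N D.
move=> H1 H2; nia.
Qed.

Lemma rat_bound (a b q c : nat) (eps : rat) : (0 < b)%N -> (0 < q)%N ->
  (a * q <= c * b)%N -> c%:R / eps < q%:R -> 0 < eps -> a%:R / b%:R < eps.
Proof.
move=> b0 q0 H Hq e0.
have Hb : 0 < b%:R :> rat by rewrite ltr0n.
have Hq0 : 0 < q%:R :> rat by rewrite ltr0n.
rewrite ltr_pdivrMr //.
rewrite ltr_pdivrMr // in Hq.
have H' : (a%:R * q%:R <= c%:R * b%:R :> rat) by rewrite -!natrM ler_nat.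
nra.
Qed.

Lemma diff_rank (F : finFieldType) n (d : 'M[F]_n) : d \in differentials F n ->
  (2 * \rank d <= n)%N /\ homology_dim d = (n - 2 * \rank d)%N.
Proof.
rewrite inE => /eqP dd.
have : (d <= kermx d)%MS by rewrite sub_kermx dd.
move/mxrankS; rewrite mxrank_ker => H.
by split; [lia | rewrite /homology_dim mxrank_ker; lia].
Qed.

Lemma hom_set (F : finFieldType) n r k : n = (r + 2 * k)%N ->
  [set d in differentials F n | homology_dim d == r] = Dk F n k.
Proof.
move=> E; apply/setP => d; rewrite !inE.
case Hd0: (d *m d == 0) => //=.
have Hd : d \in differentials F n by rewrite inE Hd0.
have [h1 h2] := diff_rank Hd; rewrite h2; apply/idP/idP => /eqP H; apply/eqP; lia.
Qed.

Lemma hom_set0 (F : finFieldType) n r : (n < r)%N ->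
  [set d in differentials F n | homology_dim d == r] = set0.
Proof.
move=> E; apply/setP => d; rewrite !inE.
case Hd0: (d *m d == 0) => //=.
have Hd : d \in differentials F n by rewrite inE Hd0.
have [h1 h2] := diff_rank Hd; rewrite h2; apply/eqP; lia.
Qed.

Lemma exp_gap n m k : (2 * m <= n)%N -> (k < m)%N ->
  ((2 * k * (n - k)).+1 <= 2 * m * (n - m))%N.
Proof.
move=> H1 H2.
have [a ->] : exists a, n = (2 * m + a)%N by exists (n - 2 * m)%N; lia.
have [b ->] : exists b, m = (k + b.+1)%N by exists (m - k.+1)%N; lia.
have -> : (2 * (k + b.+1) + a - k = k + 2 * b.+1 + a)%N by lia.
have -> : (2 * (k + b.+1) + a - (k + b.+1) = k + b.+1 + a)%N by lia.
nia.
Qed.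

Lemma key_low (F : finFieldType) n k : (2 * n <= #|F|)%N -> (k < n./2)%N ->
  (#|Dk F n k| * #|F| <= 4 * #|Dk F n n./2|)%N.
Proof.
move=> Hq Hk.
have h2m : (2 * n./2 <= n)%N by lia.
have q0 : (0 < #|F|)%N by apply/card_gt0P; exists 0.
have U := @card_Dk_upper F n k (ltac:(lia)) (ltac:(lia)).
have L : (#|F| ^ (2 * n./2 * (n - n./2)) <= 2 * #|Dk F n n./2|)%N.
  have [a Ea] : exists a, n = (n./2 + a)%N by exists (n - n./2)%N; lia.
  have Hma : (n./2 <= a)%N by lia.
  have := @lower_aux F n./2 a Hma (ltac:(lia)).
  by rewrite -Ea (_ : n - n./2 = a)%N //; lia.
have G := exp_gap h2m Hk.
have : (#|F| ^ (2 * k * (n - k)).+1 <= #|F| ^ (2 * n./2 * (n - n./2)))%N by rewrite leq_pexp2l.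
rewrite expnS.
move: U L; move: (#|F| ^ (2 * k * (n - k)))%N (#|F| ^ (2 * n./2 * (n - n./2)))%N #|F| => X Y q.
move=> H1 H2 H3; nia.
Qed.

Definition Low (F : finFieldType) n j := [set d in differentials F n | (\rank d < j)%N].

Lemma card_low (F : finFieldType) n j :
  (#|Low F n j| <= \sum_(0 <= k < j) #|Dk F n k|)%N.
Proof.
elim: j => [|j IH].
  rewrite big_geq // leqn0 cards_eq0; apply/eqP/setP => d; rewrite !inE.
  by rewrite ltn0 andbF.
rewrite big_nat_recr //=.
apply: leq_trans (_ : #|Low F n j :|: Dk F n j| <= _)%N.
  apply/subset_leq_card/subsetP => d; rewrite !inE ltnS leq_eqVlt.
  by case/andP => -> /orP [->|->]; rewrite ?orbT.
by rewrite cardsU; apply: leq_trans (leq_subr _ _) _; rewrite leq_add2r.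
Qed.

Lemma card_split (F : finFieldType) n :
  #|differentials F n| = (#|Dk F n n./2| + #|Low F n n./2|)%N.
Proof.
rewrite -(cardsID [set d : 'M[F]_n | \rank d == n./2] (differentials F n)).
congr (_ + _)%N; apply: eq_card => d; rewrite !inE.
  by rewrite andbC.
case Hd0: (d *m d == 0); rewrite ?andbF //= andbT.
have Hd : d \in differentials F n by rewrite inE Hd0.
have [h1 _] := diff_rank Hd.
apply/idP/idP => [H|/ltn_eqF ->//]; rewrite ltn_neqAle H /=; lia.
Qed.

Lemma D_gt0 (F : finFieldType) n : (0 < #|differentials F n|)%N.
Proof. by apply/card_gt0P; exists 0; rewrite inE mulmx0. Qed.

Lemma main_low (F : finFieldType) n k : (2 * n <= #|F|)%N -> (k < n./2)%N ->
  (#|Dk F n k| * #|F| <= 4 * #|differentials F n|)%N.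
Proof.
move=> Hq Hk; apply: leq_trans (key_low Hq Hk) _; rewrite leq_mul2l /=.
by apply/subset_leq_card/subsetP => d; rewrite inE => /andP [].
Qed.

Lemma main_Low (F : finFieldType) n : (2 * n <= #|F|)%N ->
  (#|Low F n n./2| * #|F| <= (4 * n./2) * #|differentials F n|)%N.
Proof.
move=> Hq; apply: leq_trans (leq_mul (card_low F n n./2) (leqnn _)) _.
rewrite big_distrl /=.
apply: leq_trans (_ : \sum_(0 <= k < n./2) (4 * #|differentials F n|) <= _)%N.
  rewrite big_nat_cond [X in (_ <= X)%N]big_nat_cond; apply: leq_sum => k.
  by rewrite andbT => /andP [_ Hk]; apply: main_low.
by rewrite sum_nat_const_nat subn0 mulnA (mulnC n./2).
Qed.

Lemma Q_exists (c : nat) (eps : rat) : 0 < eps -> forall n : nat,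
  exists Q : nat, forall q : nat, (Q <= q)%N -> (2 * n <= q)%N /\ c%:R / eps < q%:R.
Proof.
move=> e0 n; exists (maxn (2 * n) (Num.Def.archi_bound (c%:R / eps))) => q.
rewrite geq_max => /andP [H1 H2]; split => //.
have h : 0 <= c%:R / eps :> rat by rewrite divr_ge0 // ltW.
apply: lt_le_trans (archi_boundP h) _; by rewrite ler_nat.
Qed.

Lemma tends_max (n r : nat) : n = (r + 2 * n./2)%N ->
  tends_to_as_q_infty (fun F => p_hom F n r) 1.
Proof.
move=> E eps e0.
have [Q HQ] := Q_exists (4 * n./2) e0 n.
exists Q => F HF; have [Hq Hb] := HQ _ HF.
rewrite /p_hom (hom_set F E).
have D0 := D_gt0 F n.
have Hs := card_split F n.
have -> : (#|Dk F n n./2|%:R / #|differentials F n|%:R - 1 : rat)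
        = - (#|Low F n n./2|%:R / #|differentials F n|%:R).
  rewrite Hs natrD; field.
  by rewrite -natrD -Hs pnatr_eq0 -lt0n.
rewrite normrN ger0_norm ?divr_ge0 ?ler0n //.
apply: (rat_bound D0 _ (main_Low Hq) Hb e0).
by apply/card_gt0P; exists 0.
Qed.

Theorem theorem1 (n : nat) (hn : (0 < n)%N) :
  (forall r : nat, (1 < r)%N -> odd r = odd n ->
     tends_to_as_q_infty (fun F => p_hom F n r) 0)
  /\ (~~ odd n -> tends_to_as_q_infty (fun F => p_hom F n 0) 1)
  /\ (odd n -> tends_to_as_q_infty (fun F => p_hom F n 1) 1).
Proof.
split; last split.
- move=> r Hr Hodd eps e0.
  have [Q HQ] := Q_exists 4 e0 n.
  exists Q => F HF; have [Hq Hb] := HQ _ HF.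
  case: (ltnP n r) => Hnr.
    by rewrite /p_hom hom_set0 // cards0 mul0r subr0 normr0.
  have Hev := odd_double_half (n - r); rewrite oddB // Hodd addbb /= in Hev.
  have E : n = (r + 2 * (n - r)./2)%N by lia.
  have Hk : ((n - r)./2 < n./2)%N by lia.
  rewrite /p_hom (hom_set F E) subr0 ger0_norm ?divr_ge0 ?ler0n //.
  apply: (rat_bound (D_gt0 F n) _ (main_low Hq Hk) Hb e0).
  by apply/card_gt0P; exists 0.
- move=> Hev; apply: tends_max.
  have := odd_double_half n; rewrite (negbTE Hev) /=; lia.
- move=> Hod; apply: tends_max.
  have := odd_double_half n; rewrite Hod /=; lia.
Qed.
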